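(* Let $M'=M[D,K]$ be a compatible minor of the weighted uncertainty matroid $\mathcal{M}$ such that $M'$ contains no non-trivial element $f$ with either (a) $w_f=L_f$ and $f$ a maximum-weight element of some circuit of $M'$, or (b) $w_f=U_f$ and $f$ a minimum-weight element of $E(M')\setminus\mathrm{span}_{M'}(B'\setminus\{f\})$ for some basis $B'$ of $M'$ containing $f$. Let $e$ be a trivial element of $M'$ such that (i) there exists a basis $B$ of $M'$ with $e\in B$ and (ii) $e$ has minimum weight among the elements of $E(M')$ not in $\mathrm{span}_{M'}(B\setminus\{e\})$. Then $M[D,K\cup\{e\}]$ is a compatible minor of $\mathcal{M}$.
   Context: A weighted uncertainty matroid $\mathcal{M}=(E,\mathcal{I},A,w)$ consists of a matroid $M=(E,\mathcal{I})$ on a finite set $E$, for each $e\in E$ a non-empty finite union $A_e$ of bounded real intervals (each open or closed), a weight $w_e\in A_e$, and a query cost $c_e\ge0$. $L_e=\inf A_e$, $U_e=\sup A_e$; $e$ is trivial if $A_e=\{w_e\}$. A minimum-weight basis (MWB) is a basis minimizing total weight. A weight assignment is $w^*$ with $w^*_e\in A_e$, consistent with $Q$ if $w^*_e=w_e$ on $Q$. $Q$ verifies an MWB $B$ if for every weight assignment consistent with $Q$, $B$ is an MWB with respect to it; a certificate for $\mathcal{M}$ is a set verifying some MWB, and $c^*$ denotes the minimum cost $\sum_{e\in Q}c_e$ of a certificate for $\mathcal{M}$. For $D,K\subseteq E$, $M[D,K]$ is the matroid obtained from $M$ by deleting $D$ and contracting $K$, ground set $E(M[D,K])=E\setminus(D\cup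 K)$, weights restricted. $M[D,K]$ is a compatible minor if there is a set $Q$ of cost $c^*$ verifying an MWB $B$ of $\mathcal{M}$ with $K\subseteq B$, $D\cap B=\emptyset$. $\mathrm{span}_N(X)=\{e: r_N(X\cup\{e\})=r_N(X)\}$. *)

(* Defs.v *)
From HB Require Import structures.
From mathcomp Require Import all_boot all_order all_algebra.
From mathcomp Require Import reals.
Set Implicit Arguments. Unset Strict Implicit. Unset Printing Implicit Defensive.
Import Order.TTheory GRing.Theory Num.Theory.
Local Open Scope ring_scope.

Record matroid (E : finType) := Matroid {
  indep : {set E} -> bool;
  indep0 : indep set0;
  indep_sub : forall I J : {set E}, J \subset I -> indep I -> indep J;
  indep_aug : forall I J : {set E}, indep I -> indep J -> (#|I| < #|J|)%N ->
     exists2 x, x \in J :\: I & indep (x |: I)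
}.

Section Matroids.
Variable E : finType.
Variable M : matroid E.

Definition rank (X : {set E}) : nat :=
  \max_(I : {set E} | indep M I && (I \subset X)) #|I|.

(* The minor M[D,K]: delete D, contract K; ground set E \ (D u K).
   Rank of the contraction: r'(X) = r(X u K) - r(K). *)
Definition mground (D K : {set E}) : {set E} := ~: (D :|: K).
Definition mrank (D K : {set E}) (X : {set E}) : nat :=
  (rank (X :|: K) - rank K)%N.
Definition mindep (D K : {set E}) (X : {set E}) : bool :=
  (X \subset mground D K) && (mrank D K X == #|X|).
Definition mbasis (D K : {set E}) (B : {set E}) : bool :=
  mindep D K B &&
  [forall f in mground D K, mindep D K (f |: B) ==> (f \in B)].
Definition mcircuit (D K : {set E}) (C : {set E}) : bool :=
  (C \subset mground D K) && ~~ mindep D K C &&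
  [forall C' : {set E}, (C' \proper C) ==> mindep D K C'].
Definition mspan (D K : {set E}) (X : {set E}) : {set E} :=
  [set f in mground D K | mrank D K (f |: X) == mrank D K X].
End Matroids.

Section Uncertainty.
Variable R : realType.
Variable E : finType.

(* A_e is given as a finite list of intervals; A_e is their union. *)
Definition inA (A : E -> seq (interval R)) (e : E) (x : R) : bool :=
  has (fun i => x \in i) (A e).

(* a bounded interval which is either open (a,b) or closed [a,b] *)
Definition bounded_open_or_closed (i : interval R) : bool :=
  match i with
  | Interval (BSide b1 _) (BSide b2 _) => b1 == ~~ b2
  | _ => false
  end.

Definition Lo (A : E -> seq (interval R)) (e : E) : R := inf (fun x : R => is_true (inA A e x)).
Definition Up (A : E -> seq (interval R)) (e : E) : R := sup (fun x : R => is_true (inA A e x)).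

Definition trivial_elt (A : E -> seq (interval R)) (w : E -> R) (e : E) : Prop :=
  forall x, inA A e x <-> x = w e.

Definition wum_wf (A : E -> seq (interval R)) (w c : E -> R) : Prop :=
  forall e, [/\ all bounded_open_or_closed (A e), exists x, inA A e x,
               inA A e (w e) & 0 <= c e].

Definition weight_assignment (A : E -> seq (interval R)) (ws : E -> R) : Prop :=
  forall e, inA A e (ws e).

Definition consistent (w : E -> R) (Q : {set E}) (ws : E -> R) : Prop :=
  forall e, e \in Q -> ws e = w e.

Variable M : matroid E.

Definition is_basis (B : {set E}) : bool := mbasis M set0 set0 B.

Definition is_MWB (ws : E -> R) (B : {set E}) : Prop :=
  is_basis B /\
  forall B', is_basis B' -> \sum_(x in B) ws x <= \sum_(x in B') ws x.

Definition verifies (A : E -> seq (interval R)) (w : E -> R)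
    (Q B : {set E}) : Prop :=
  forall ws, weight_assignment A ws -> consistent w Q ws -> is_MWB ws B.

Definition certificate A w (Q : {set E}) : Prop := exists B, verifies A w Q B.

Definition cost (c : E -> R) (Q : {set E}) : R := \sum_(x in Q) c x.

Definition compatible_minor A (w c : E -> R) (D K : {set E}) : Prop :=
  exists Q B, [/\ verifies A w Q B,
                  (forall Q', certificate A w Q' -> cost c Q <= cost c Q'),
                  K \subset B & [disjoint D & B]].
End Uncertainty.

(* Main.v *)
Require Import Defs.
From HB Require Import structures.
From mathcomp Require Import all_boot all_order all_algebra.
From mathcomp Require Import zify.
From mathcomp Require Import reals.
From Stdlib Require Import Classical_Prop.
Set Implicit Arguments. Unset Strict Implicit. Unset Printing Implicit Defensive.

Section Mat.
Variable E : finType.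
Variable M : matroid E.
Local Notation ind := (indep M).

Lemma rank_le (X : {set E}) : rank M X <= #|X|.
Proof. by apply/bigmax_leqP => I /andP[_ /subset_leq_card]. Qed.

Lemma rank_indep (X : {set E}) : ind X -> rank M X = #|X|.
Proof.
move=> iX; apply/eqP; rewrite eqn_leq rank_le /=.
by apply: (@leq_bigmax_cond _ (fun I => ind I && (I \subset X)) (fun I => #|I|) X); rewrite iX subxx.
Qed.

Lemma rank_ge (I X : {set E}) : ind I -> I \subset X -> #|I| <= rank M X.
Proof.
by move=> iI sIX; apply: (@leq_bigmax_cond _ (fun I => ind I && (I \subset X)) (fun I => #|I|) I); rewrite iI sIX.
Qed.

Lemma rank_card_indep (X : {set E}) : rank M X = #|X| -> ind X.
Proof.
move=> rX; case iX: (ind X) => //.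
have X0 : X != set0 by apply: contraFneq iX => ->; exact: indep0.
have : rank M X <= #|X|.-1.
  apply/bigmax_leqP => I /andP[iI sIX].
  have pIX : I \proper X by rewrite properEneq sIX andbT; apply: contraTneq iI => ->; rewrite iX.
  by move: (proper_card pIX); move: #|I| #|X| => a b; lia.
have : 0 < #|X| by rewrite card_gt0.
rewrite rX; move: #|X| => n; lia.
Qed.

Lemma max_ext (T S : {set E}) : ind T -> T \subset S ->
  exists X, [/\ ind X, T \subset X, X \subset S &
     forall x, x \in S -> ind (x |: X) -> x \in X].
Proof.
move=> iT sTS.
suff: forall n X, #|S :\: X| <= n -> ind X -> T \subset X -> X \subset S ->
  exists X, [/\ ind X, T \subset X, X \subset S &
     forall x, x \in S -> ind (x |: X) -> x \in X].
  by move/(_ _ T (leqnn _) iT (subxx _) sTS).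
elim=> [|n IH] X hn iX sTX sXS.
  exists X; split=> // x xS _; apply: contraTT hn => xX.
  by rewrite -ltnNge card_gt0; apply/set0Pn; exists x; rewrite inE xX.
case: (boolP [exists x in S, (x \notin X) && ind (x |: X)]).
  case/exists_inP=> x xS /andP[xX ixX].
  apply: (IH (x |: X)) => //.
  - have : S :\: (x |: X) \proper S :\: X.
      rewrite properE; apply/andP; split.
        by apply: setDS; apply: subsetUr.
      apply/subsetPn; exists x; first by rewrite inE xX xS.
      by rewrite inE setU11.
    move/proper_card; move: hn; move: #|S :\: X| #|S :\: (x |: X)| => a b; lia.
  - by apply: subset_trans sTX (subsetUr _ _).
  - by rewrite subUset sub1set xS sXS.
move/exists_inPn=> H; exists X; split=> // x xS ixX.
by move: (H x xS); rewrite ixX andbT negbK.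
Qed.

Lemma span_bound (X Y J : {set E}) : ind X ->
  (forall y, y \in Y -> y \in X \/ ~~ ind (y |: X)) ->
  ind J -> J \subset X :|: Y -> #|J| <= #|X|.
Proof.
move=> iX hY iJ sJ; rewrite leqNgt; apply/negP => lt.
case: (indep_aug iX iJ lt) => x /setDP[xJ xX] ixX.
have : x \in X :|: Y by apply: (subsetP sJ).
case/setUP => [|xY]; first by rewrite (negbTE xX).
by case: (hY x xY) => [|/negP]; [rewrite (negbTE xX)|].
Qed.

Definition maxind B := ind B /\ forall x, ind (x |: B) -> x \in B.

Lemma big_basis (B X : {set E}) : maxind B -> ind X -> #|B| <= #|X| -> maxind X.
Proof.
move=> [iB mB] iX le; split=> // h ihX; apply/negPn/negP => hX.
have lt : #|B| < #|h |: X| by rewrite cardsU1 hX add1n ltnS.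
case: (indep_aug iB ihX lt) => x /setDP[_ xB] ixB.
by move: (mB x ixB); rewrite (negbTE xB).
Qed.


Lemma exch (B I0 : {set E}) e : maxind B -> ind I0 -> e \notin I0 ->
  ind (e |: I0) -> e \notin B ->
  exists f, [/\ f \in B, f \notin I0, ind (f |: I0) & ind ((e |: B) :\ f)].
Proof.
move=> [iB mB] iI0 eI0 ieI0 eB.
pose T := [set t in B | (t \in I0) || ~~ ind (t |: I0)].
have sTB : T \subset B by apply/subsetP => t; rewrite inE => /andP[].
have iT : ind T by apply: indep_sub sTB iB.
have ieT : ind (e |: T).
  have [X [iX sTX sXS mX]] := max_ext iT (subsetUr I0 T).
  have leX : #|X| <= #|I0|.
    apply: (span_bound (Y := T)) => // y; rewrite inE => /andP[_ /orP[]]; by [left|right].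
  have lt : #|X| < #|e |: I0| by rewrite cardsU1 eI0 add1n ltnS.
  case: (indep_aug iX ieI0 lt) => x /setDP[] /setU1P[-> _ ieX|xI0 xX ixX].
    by apply: indep_sub ieX; apply: setUS.
  have xS : x \in I0 :|: T by rewrite inE xI0.
  by move: (mX x xS ixX); rewrite (negbTE xX).
have [X [iX seTX sXeB mX]] := max_ext ieT (setUS _ sTB).
have eX : e \in X by apply: (subsetP seTX); rewrite setU11.
have [f feB fX] : exists2 f, f \in e |: B & f \notin X.
  apply/exists_inP; apply: contraT => /exists_inPn H.
  have : e |: B \subset X by apply/subsetP => y /H; rewrite negbK.
  move/(indep_sub)/(_ iX) => /mB; by rewrite (negbTE eB).
have fB : f \in B by case/setU1P: feB => // fe; move: fX; rewrite fe eX.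
have fT : f \notin T by apply: contra fX; apply: (subsetP (subset_trans (subsetUr _ _) seTX)).
have leB : #|B| <= #|X|.
  rewrite leqNgt; apply/negP => lt.
  case: (indep_aug iX iB lt) => x /setDP[xB xX] ixX.
  have xS : x \in e |: B by rewrite inE xB orbT.
  by move: (mX x xS ixX); rewrite (negbTE xX).
have XE : X = (e |: B) :\ f.
  apply/eqP; rewrite eqEcard; apply/andP; split.
    apply/subsetP => y yX; rewrite in_setD1 (subsetP sXeB _ yX) andbT.
    by apply: contraNneq fX => <-.
  have H := cardsD1 f (e |: B); rewrite feB cardsU1 eB /= in H.
  rewrite /= !add1n in H; case: H => <-; exact: leB.
exists f; split=> //; last by rewrite -XE.
  by move: fT; rewrite inE fB /= negb_or => /andP[].
by move: fT; rewrite inE fB /= negb_or negbK => /andP[].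
Qed.

Lemma mindepE (D K X : {set E}) : ind K -> X \subset mground D K ->
  mindep M D K X = ind (X :|: K).
Proof.
move=> iK sX; rewrite /mindep sX /= /mrank (rank_indep iK).
have dXK : [disjoint X & K].
  rewrite disjoint_subset; apply/subsetP => x xX; rewrite inE /=.
  by have := subsetP sX x xX; rewrite /mground !inE negb_or => /andP[].
case iXK: (ind (X :|: K)).
  by rewrite (rank_indep iXK) cardsU (disjoint_setI0 dXK) cards0 subn0 addnK eqxx.
apply/negbTE/negP => /eqP H.
case X0: (X == set0).
  by move/eqP: X0 => X0; move: iXK; rewrite X0 set0U iK.
have : 0 < #|X| by rewrite card_gt0 X0.
move=> Xp.
have : rank M (X :|: K) = #|X :|: K|.
  rewrite cardsU (disjoint_setI0 dXK) cards0 subn0; move: H Xp; move: (rank M (X :|: K)) #|X| #|K| => a b d; lia.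
by move/rank_card_indep; rewrite iXK.
Qed.


Lemma mground00 : mground set0 set0 = [set: E].
Proof. by rewrite /mground setU0 setC0. Qed.

Lemma basis_maxind B : mbasis M set0 set0 B -> maxind B.
Proof.
case/andP=> iB /forall_inP mB.
have sub : forall X : {set E}, X \subset mground set0 set0 by move=> X; rewrite mground00 subsetT.
rewrite (mindepE (indep0 M) (sub B)) setU0 in iB; split=> // x ix.
by apply: (implyP (mB x _)); [rewrite mground00 inE | rewrite (mindepE (indep0 M) (sub _)) setU0].
Qed.

Lemma maxind_basis B : maxind B -> mbasis M set0 set0 B.
Proof.
case=> iB mB.
have sub : forall X : {set E}, X \subset mground set0 set0 by move=> X; rewrite mground00 subsetT.
rewrite /mbasis (mindepE (indep0 M) (sub B)) setU0 iB /=.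
apply/forall_inP => x _; apply/implyP; rewrite (mindepE (indep0 M) (sub _)) setU0; exact: mB.
Qed.

Lemma mrank_card D K X : mindep M D K X -> mrank M D K X = #|X|.
Proof. by case/andP=> _ /eqP. Qed.

End Mat.

Import Order.TTheory GRing.Theory Num.Theory.
Local Open Scope ring_scope.

Lemma sup_max (R : realType) (S : R -> bool) (m : R) :
  S m -> (forall x, S x -> x <= m) -> sup (fun x => is_true (S x)) = m.
Proof.
move=> Sm ub; apply/le_anti/andP; split.
  apply: ge_sup; first by exists m.
  by move=> x /= Sx; apply: ub.
apply: (ub_le_sup); last by [].
by exists m => x /= Sx; apply: ub.
Qed.

Theorem lemma20 (R : realType) (E : finType) (M : matroid E)
    (A : E -> seq (interval R)) (w c : E -> R) (D K : {set E}) (e : E) :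
  wum_wf A w c ->
  compatible_minor M A w c D K ->
  (* M' = M[D,K] has no non-trivial element f of type (a) or (b) *)
  (forall f, f \in mground D K -> ~ trivial_elt A w f ->
     ~ (w f = Lo A f /\
        exists C, [/\ mcircuit M D K C, f \in C & forall g, g \in C -> w g <= w f])
     /\
     ~ (w f = Up A f /\
        exists B', [/\ mbasis M D K B', f \in B',
                      f \in mground D K :\: mspan M D K (B' :\ f) &
                      forall g, g \in mground D K :\: mspan M D K (B' :\ f) ->
                        w f <= w g])) ->
  e \in mground D K ->
  trivial_elt A w e ->
  (exists B, [/\ mbasis M D K B, e \in B &
     forall g, g \in mground D K :\: mspan M D K (B :\ e) -> w e <= w g]) ->
  compatible_minor M A w c D (e |: K).
Proof.
move=> wf [Q [B [verQB optQ sKB dDB]]] hab eG triv_e [B0 [bB0 eB0 minB0]].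
have waw : weight_assignment A w by move=> x; case: (wf x).
have [bB mwbB] := verQB w waw (fun _ _ => erefl).
have maxB := basis_maxind bB.
have iB : indep M B by case: maxB.
have iK : indep M K by apply: indep_sub sKB iB.
have eK : e \notin K by move: eG; rewrite /mground !inE negb_or => /andP[].
have eD : e \notin D by move: eG; rewrite /mground !inE negb_or => /andP[].
case eB : (e \in B).
  exists Q, B; split=> //; by rewrite subUset sub1set eB sKB.
have sB0G : B0 \subset mground D K by case/andP: bB0 => /andP[].
have iB0K : indep M (B0 :|: K).
  by case/andP: bB0; rewrite (mindepE iK sB0G).
set I0 := (B0 :\ e) :|: K.
have eI0 : e \notin I0 by rewrite !inE (negbTE eK) eqxx.
have eI0E : e |: I0 = B0 :|: K by rewrite /I0 setUA (setD1K eB0).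
have iI0 : indep M I0 by apply: indep_sub iB0K; rewrite -eI0E subsetUr.
have ieI0 : indep M (e |: I0) by rewrite eI0E.
have [f [fB fI0 ifI0 iX]] := exch maxB iI0 eI0 ieI0 (negbT eB).
set X := (e |: B) :\ f.

have feB : f \in e |: B by rewrite in_setU1 fB orbT.
have fK : f \notin K by apply: contra fI0 => fK; rewrite /I0 in_setU fK orbT.
have fD : f \notin D by apply/negbT; exact: (disjointFl dDB fB).
have fG : f \in mground D K by rewrite /mground !inE negb_or fD fK.
have fe : f != e by apply/eqP => fe; move: eB; rewrite -fe fB.
have wef : w e <= w f.
  apply: minB0; rewrite in_setD fG andbT /mspan inE fG /=.
  have s1 : B0 :\ e \subset mground D K by apply: subset_trans (subsetDl _ _) sB0G.
  have s2 : f |: (B0 :\ e) \subset mground D K by rewrite subUset sub1set fG s1.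
  have m1 : mindep M D K (f |: (B0 :\ e)) by rewrite (mindepE iK s2) -setUA.
  have m2 : mindep M D K (B0 :\ e) by rewrite (mindepE iK s1).
  have fnB0 : f \notin B0 :\ e by apply: contra fI0 => h; rewrite /I0 in_setU h.
  by rewrite (mrank_card m1) (mrank_card m2) cardsU1 fnB0 /= add1n gtn_eqF.
have sumX : forall ws : E -> R,
    \sum_(i in X) ws i + ws f = ws e + \sum_(i in B) ws i.
  move=> ws.
  have E1 : \sum_(i in e |: B) ws i = ws e + \sum_(i in B) ws i by rewrite big_setU1 //= eB.
  have E2 : \sum_(i in e |: B) ws i = ws f + \sum_(i in X) ws i by rewrite (big_setD1 f) //.
  by rewrite -E1 E2 addrC.
have cX : #|X| = #|B|.
  have H := cardsD1 f (e |: B); rewrite feB cardsU1 eB /= !add1n in H; by case: H.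
have maxX : maxind M X by apply: big_basis maxB iX _; rewrite cX.
have triv_val : forall ws, weight_assignment A ws -> ws e = w e.
  by move=> ws wa; apply/(triv_e (ws e)).1; exact: wa e.
have key : forall ws, weight_assignment A ws -> consistent w Q ws -> w e <= ws f.
  move=> ws wa cs.
  case fQ : (f \in Q); first by rewrite (cs f fQ).
  case: (classic (trivial_elt A w f)) => [trf|ntrf].
    by rewrite ((trf (ws f)).1 (wa f)).
  exfalso; apply: (proj2 (hab f fG ntrf)); split.
    symmetry; rewrite /Up; apply: sup_max; first by case: (wf f).
    move=> x Ax.
    pose ws' := fun y => if y == f then x else w y.
    have wa' : weight_assignment A ws'.
      by move=> y; rewrite /ws'; case: eqP => [->|_]; [exact: Ax | exact: waw].
    have cs' : consistent w Q ws'.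
      by move=> y yQ; rewrite /ws'; case: eqP => // yf; move: fQ; rewrite -yf yQ.
    have [_ mw] := verQB ws' wa' cs'.
    have wsf : ws' f = x by rewrite /ws' eqxx.
    have wse : ws' e = w e by rewrite /ws' eq_sym (negbTE fe).
    have le := mw X (maxind_basis maxX); have s := sumX ws'.
    apply: le_trans wef.
    have : \sum_(i in B) ws' i + ws' f <= ws' e + \sum_(i in B) ws' i by rewrite -s lerD2r.
    by rewrite [ws' e + _]addrC lerD2l wsf wse.
  have sBKG : B :\: K \subset mground D K.
    apply/subsetP => x /setDP[xB xK]; rewrite /mground !inE negb_or xK andbT.
    by rewrite (disjointFl dDB xB).
  have BKK : (B :\: K) :|: K = B.
    apply/setP => x; rewrite !inE; case xK: (x \in K) => /=; by rewrite ?orbF // (subsetP sKB x xK).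
  have fBK : f \in B :\: K by rewrite in_setD fK fB.
  have sY : (B :\: K) :\ f \subset mground D K by apply: subset_trans (subsetDl _ _) sBKG.
  have mBK : mindep M D K (B :\: K) by rewrite (mindepE iK sBKG) BKK.
  have iBf : indep M (B :\ f) by apply: indep_sub iB; exact: subsetDl.
  have YK : ((B :\: K) :\ f) :|: K = B :\ f.
    apply/setP => x; rewrite !inE; case xK: (x \in K) => /=; rewrite ?orbF ?orbT //.
    rewrite (subsetP sKB x xK) andbT; apply/esym/eqP => xf; move: fK; by rewrite -xf xK.
  have mY : mindep M D K ((B :\: K) :\ f) by rewrite (mindepE iK sY) YK.
  exists (B :\: K); split => //.
  - rewrite /mbasis mBK /=; apply/forall_inP => g gG; apply/implyP => mg.
    have sg : g |: (B :\: K) \subset mground D K by rewrite subUset sub1set gG sBKG.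
    rewrite (mindepE iK sg) -setUA BKK in mg.
    have gB := (proj2 maxB) g mg.
    rewrite in_setD gB andbT.
    by move: gG; rewrite /mground !inE negb_or => /andP[].
  - rewrite in_setD fG andbT /mspan inE fG /= (setD1K fBK) (mrank_card mBK) (mrank_card mY).
    by rewrite (cardsD1 f (B :\: K)) fBK /= add1n gtn_eqF.
  - move=> g /setDP[gG]; rewrite /mspan inE gG /= => ng.
    have gK : g \notin K by move: gG; rewrite /mground !inE negb_or => /andP[].
    have gY : g \notin (B :\: K) :\ f.
      apply: contra ng => gY.
      have -> : g |: ((B :\: K) :\ f) = (B :\: K) :\ f by apply/setUidPr; rewrite sub1set.
      exact: eqxx.
    have gBf : g \notin B :\ f.
      apply: contra gY; rewrite !inE => /andP[-> ->]; by rewrite gK.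
    have ig : indep M (g |: (B :\ f)).
      case ig: (indep M (g |: (B :\ f))) => //.
      have rk : rank M (g |: (B :\ f)) = #|B :\ f|.
        apply/eqP; rewrite eqn_leq; apply/andP; split.
          apply/bigmax_leqP => J /andP[iJ sJ].
          apply: (span_bound (Y := [set g])) iJ _ => //.
            by move=> y; rewrite inE => /eqP ->; right; rewrite ig.
          by rewrite setUC.
        by apply: rank_ge => //; exact: subsetUr.
      move: ng; rewrite /mrank -setUA YK rk (rank_indep iBf) eqxx.
      by [].
    have cG : (#|B| <= #|g |: (B :\ f)|)%N.
      by rewrite cardsU1 gBf (cardsD1 f B) fB.
    have maxG := big_basis maxB ig cG.
    have := mwbB _ (maxind_basis maxG).
    by rewrite (big_setD1 f fB) /= big_setU1 //= lerD2r.
have verX : verifies M A w Q X.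
  move=> ws wa cs; split; first exact: maxind_basis maxX.
  move=> B'' bB''; have [_ mw] := verQB ws wa cs.
  apply: le_trans (mw B'' bB'').
  have k := key ws wa cs; have s := sumX ws; rewrite (triv_val ws wa) in s.
  by rewrite -(lerD2r (ws f)) s addrC lerD2l.
exists Q, X; split => //.
  rewrite subUset sub1set in_setD1 eq_sym fe setU11 /=.
  apply/subsetP => k kK; rewrite in_setD1 in_setU1 (subsetP sKB k kK) orbT andbT.
  by apply/eqP => kf; move: fK; rewrite -kf kK.
rewrite disjoint_subset; apply/subsetP => x xD; rewrite inE /=.
apply/negP; rewrite in_setD1 => /andP[_ /setU1P[xe|xB]].
  by move: eD; rewrite -xe xD.
by move: xD; rewrite (disjointFl dDB xB).
Qed.
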